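(* Let $n\ge1$, $k\ge1$, $\mathcal{D}=\{0,\ldots,n\}$. Every infinite sequence in $\mathcal{D}^{\mathbb{N}}$ obtained as an infinite concatenation $\mathbf{W}_{i_1}\mathbf{W}_{i_2}\mathbf{W}_{i_3}\cdots$ with $i_1,i_2,\ldots\in\{0,\ldots,n\}$ is $k$-simply normal.
   Context: Let $\mathbf{w}_0,\ldots,\mathbf{w}_{(n+1)^k-1}$ be the elements of $\mathcal{D}^k$ in strictly increasing lexicographic order. For $i=0,\ldots,n$ define $\mathbf{W}_i=\mathbf{w}_i\mathbf{w}_{i+1}\cdots\mathbf{w}_{(n+1)^k-1}\mathbf{w}_0\cdots\mathbf{w}_{i-1}$. For $\mathbf{b}\in\mathcal{D}^k$ and $\mathbf{a}\in\mathcal{D}^{\mathbb{N}}$ let $\mathrm{freq}_{\mathbf{b}}(\mathbf{a})=\lim_{m\to\infty}\frac{1}{m}\#\{1\le j\le m: a_j\cdots a_{j+k-1}=\mathbf{b}\}$ when the limit exists; $\mathbf{a}$ is $k$-simply normal if $\mathrm{freq}_{\mathbf{b}}(\mathbf{a})=(n+1)^{-k}$ for all $\mathbf{b}\in\mathcal{D}^k$. *)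

(* Defs.v *)
From Stdlib Require Import Reals.
From mathcomp Require Import all_boot.
Set Implicit Arguments. Unset Strict Implicit. Unset Printing Implicit Defensive.

(* Digits D = {0,...,n} are represented by naturals <= n; words by seq nat. *)

Fixpoint lex_le (s t : seq nat) : bool :=
  match s, t with
  | [::], _ => true
  | _ :: _, [::] => false
  | x :: s', y :: t' => (x < y) || ((x == y) && lex_le s' t')
  end.

Fixpoint all_words (n k : nat) : seq (seq nat) :=
  match k with
  | 0 => [:: [::]]
  | k'.+1 => [seq x :: w | x <- iota 0 n.+1, w <- all_words n k']
  end.

Definition lex_words (n k : nat) : seq (seq nat) := sort lex_le (all_words n k).

Definition bigW (n k i : nat) : seq nat := flatten (rot i (lex_words n k)).

(* The infinite concatenation W_{i_1} W_{i_2} ... (all blocks have the same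
   length k * (n+1)^k); positions indexed from 0. *)
Definition concatW (n k : nat) (idx : nat -> nat) (m : nat) : nat :=
  let L := k * (n.+1) ^ k in nth 0 (bigW n k (idx (m %/ L))) (m %% L).

Definition occ (a : nat -> nat) (b : seq nat) (m : nat) : nat :=
  count (fun j => [seq a (j + t) | t <- iota 0 (size b)] == b) (iota 0 m).

Definition has_freq (a : nat -> nat) (b : seq nat) (f : R) : Prop :=
  Un_cv (fun m => Rdiv (INR (occ a b m)) (INR m)) f.

Definition simply_normal (n k : nat) (a : nat -> nat) : Prop :=
  forall b : seq nat, size b = k -> all (fun x => x <= n) b ->
    has_freq a b (Rinv (INR (n.+1 ^ k))).

(* Main.v *)
Require Import Defs.
From Stdlib Require Import Reals Lra.
From mathcomp Require Import all_boot zify.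
Set Implicit Arguments. Unset Strict Implicit. Unset Printing Implicit Defensive.

Fixpoint dig (B m x : nat) : seq nat :=
  match m with 0 => [::] | m'.+1 => (x %/ B ^ m' %% B) :: dig B m' x end.

Lemma size_dig B m x : size (dig B m x) = m.
Proof. by elim: m => //= m ->. Qed.

Lemma dig_mod B m x : 0 < B -> dig B m x = dig B m (x %% B ^ m).
Proof.
move=> B0; elim: m x => //= m IH x; congr (_ :: _).
  by rewrite expnS -modn_divl modn_mod.
rewrite IH [in RHS]IH; congr dig.
by rewrite modn_dvdm // expnS dvdn_mull.
Qed.

Lemma dig_split B a b x : dig B (a + b) x = dig B a (x %/ B ^ b) ++ dig B b x.
Proof.
elim: a => //= a IH; rewrite IH; congr (_ :: _).
by rewrite -divnMA -expnD addnC.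
Qed.

Lemma dig0 B m : dig B m 0 = nseq m 0.
Proof. by elim: m => //= m ->; rewrite div0n mod0n. Qed.

Lemma dig_inj B m x y : 0 < B -> dig B m x = dig B m y -> x %% B ^ m = y %% B ^ m.
Proof.
move=> B0; elim: m x y => [|m IH] x y /=; first by rewrite !modn1.
case=> h1 /IH h2.
have e z : z %% B ^ m.+1 = (z %/ B ^ m %% B) * B ^ m + z %% B ^ m.
  rewrite {1}(divn_eq z (B ^ m)) {1}(divn_eq (z %/ B ^ m) B) expnS.
  rewrite mulnDl -mulnA [B * _]mulnC -addnA modnMDl modn_small //.
  have h3 : z %/ B ^ m %% B < B by rewrite ltn_mod.
  have h4 : z %% B ^ m < B ^ m by rewrite ltn_mod expn_gt0 B0.
  have : (z %/ B ^ m %% B).+1 * B ^ m <= B * B ^ m by rewrite leq_mul2r h3 orbT.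
  rewrite mulSn => h5. rewrite [B ^ m * B]mulnC. apply: leq_trans h5. by rewrite addnC ltn_add2r.
by rewrite e [in RHS]e h1 h2.
Qed.

Lemma dig_surj B m s : size s = m -> all (fun d => d < B) s ->
  exists2 y, y < B ^ m & dig B m y = s.
Proof.
elim: m s => [|m IH] [|d s] //=; first by exists 0.
case=> sz /andP [dB al]; have [y yl ye] := IH s sz al.
have B0 : 0 < B by apply: leq_ltn_trans dB.
exists (d * B ^ m + y).
  rewrite expnS; have : d.+1 * B ^ m <= B * B ^ m by rewrite leq_mul2r dB orbT.
  by rewrite mulSn => h; rewrite (leq_trans _ h) // addnC ltn_add2r.
rewrite divnMDl ?expn_gt0 ?B0 // divn_small // addn0 modn_small //.
by rewrite dig_mod // modnMDl modn_small // ye.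
Qed.

Lemma iota_mul a M : iota 0 (a * M) = flatten [seq iota (x * M) M | x <- iota 0 a].
Proof.
elim: a => // a IH.
by rewrite -addn1 iotaD map_cat flatten_cat /= cats0 -IH mulnDl mul1n iotaD.
Qed.

Lemma all_words_dig n k : all_words n k = map (dig n.+1 k) (iota 0 (n.+1 ^ k)).
Proof.
elim: k => // k IH.
have -> : all_words n k.+1 = [seq x :: w | x <- iota 0 n.+1, w <- all_words n k] by [].
rewrite IH expnS iota_mul map_flatten -map_comp.
congr flatten; apply/eq_in_map => x; rewrite mem_iota /= => xB.
rewrite /= (_ : iota (x * n.+1 ^ k) (n.+1 ^ k) = map (addn (x * n.+1 ^ k)) (iota 0 (n.+1 ^ k))); last by rewrite -iotaDl addn0.
rewrite -!map_comp; apply/eq_in_map => y; rewrite mem_iota /= => yM.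
rewrite /= divnMDl ?expn_gt0 // divn_small // addn0 modn_small //.
by rewrite [in RHS]dig_mod // modnMDl modn_small.
Qed.

Lemma lex_le_trans : transitive lex_le.
Proof.
move=> t s u; elim: s t u => [|x s IH] [|y t] [|z u] //=.
case/orP=> [yx|/andP [/eqP <- ts]] /orP [xz|/andP [/eqP <- su]].
- by rewrite (ltn_trans yx xz).
- by rewrite yx.
- by rewrite xz.
- by rewrite eqxx (IH _ _ ts su) orbT.
Qed.

Lemma lex_dig B k x y : x <= y -> y < B ^ k -> lex_le (dig B k x) (dig B k y).
Proof.
elim: k x y => // k IH x y xy yB /=.
have B0 : 0 < B by move: yB; case: (posnP B) => [->|//]; rewrite exp0n.
have xB : x < B ^ k.+1 by apply: leq_ltn_trans yB.
have hx : x %/ B ^ k < B by rewrite ltn_divLR ?expn_gt0 ?B0 // -expnS.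
have hy : y %/ B ^ k < B by rewrite ltn_divLR ?expn_gt0 ?B0 // -expnS.
rewrite (modn_small hx) (modn_small hy).
have := leq_div2r (B ^ k) xy; rewrite leq_eqVlt => /orP [/eqP e|->] //.
rewrite e eqxx ltnn /=.
rewrite (dig_mod k x) // (dig_mod k y) //; apply: IH; last by rewrite ltn_mod expn_gt0 B0.
rewrite (divn_eq x (B ^ k)) (divn_eq y (B ^ k)) e in xy.
by rewrite leq_add2l in xy.
Qed.

Lemma lex_words_dig n k : lex_words n k = map (dig n.+1 k) (iota 0 (n.+1 ^ k)).
Proof.
rewrite /lex_words all_words_dig (sorted_sort lex_le_trans) //.
apply: (homo_sorted_in (P := fun y => y < n.+1 ^ k) (e := ltn)).
- move=> x y; rewrite /in_mem /= => _ yB /ltnW xy; exact: lex_dig.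
- by apply/allP => x; rewrite mem_iota.
- exact: iota_ltn_sorted.
Qed.

Lemma count_one (P : pred nat) N j0 : j0 < N -> P j0 ->
  (forall j, j < N -> P j -> j = j0) -> count P (iota 0 N) = 1.
Proof.
move=> jN Pj uq.
rewrite (@eq_in_count _ _ (pred1 j0)).
  by rewrite count_uniq_mem ?iota_uniq // mem_iota jN.
move=> j; rewrite mem_iota /= => jl; apply/idP/eqP => [/(uq _ jl)//|->//].
Qed.

Lemma arith_count P Q y1 y2 : 0 < P -> 0 < Q -> y1 < P -> y2 < Q ->
  count (fun j => (j %% P == y1) && ((j.+1 %/ P) %% Q == y2)) (iota 0 (Q * P)) = 1.
Proof.
move=> P0 Q0 y1P y2Q.
set c := y1.+1 %/ P.
have c1 : c <= 1 by have := leq_div2r P y1P; rewrite divnn P0.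
have dec j : j %% P = y1 -> j.+1 %/ P = j %/ P + c.
  move=> jm; rewrite {1}(divn_eq j P) jm -addnS divnMDl //.
set w := (y2 + Q - c) %% Q.
have wQ : w < Q by rewrite ltn_mod.
apply: (count_one (j0 := w * P + y1)).
- have : w.+1 * P <= Q * P by rewrite leq_mul2r wQ orbT.
  by rewrite mulSn => h; apply: leq_trans h; rewrite addnC ltn_add2r.
- rewrite modnMDl modn_small // eqxx /=.
  rewrite -addnS divnMDl // -/c /w modnDml subnK ?modnDr ?modn_small //.
  by apply: leq_trans c1 _; apply: leq_trans Q0 (leq_addl _ _).
move=> j jl /andP [/eqP jm /eqP jq].
have j0m : (w * P + y1) %% P = y1 by rewrite modnMDl modn_small.
have hj := dec _ jm; have hj0 := dec _ j0m.
rewrite (divn_eq j P) jm; congr (_ * _ + _).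
have jPQ : j %/ P < Q by rewrite ltn_divLR.
rewrite -(modn_small jPQ) -(modn_small wQ); apply/eqP.
rewrite -(eqn_modDr c) -hj jq.
rewrite /w modnDml subnK ?modnDr ?modn_small //.
by apply: leq_trans c1 _; apply: leq_trans Q0 (leq_addl _ _).
Qed.

Definition G (n k p : nat) : nat := nth 0 (dig n.+1 k (p %/ k)) (p %% k).

Definition win (f : nat -> nat) (k p : nat) : seq nat := [seq f (p + t) | t <- iota 0 k].

Lemma G_at n k j e : e < k -> G n k (j * k + e) = nth 0 (dig n.+1 k j) e.
Proof.
move=> ek; have k0 : 0 < k by case: k ek.
by rewrite /G modnMDl modn_small // divnMDl // divn_small // addn0.
Qed.

Lemma dig_periodic n k x : dig n.+1 k (x + n.+1 ^ k) = dig n.+1 k x.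
Proof. by rewrite dig_mod // modnDr -dig_mod. Qed.

Lemma G_periodic n k p : 0 < k -> G n k (p + k * n.+1 ^ k) = G n k p.
Proof.
by move=> k0; rewrite /G [k * _]mulnC addnC modnMDl divnMDl // addnC dig_periodic.
Qed.

Lemma win_periodic n k p : 0 < k -> win (G n k) k (p + k * n.+1 ^ k) = win (G n k) k p.
Proof.
move=> k0; apply/eq_in_map => t _ /=.
by rewrite addnAC G_periodic.
Qed.

Lemma win_block n k r j : r < k ->
  win (G n k) k (j * k + r) =
  dig n.+1 (k - r) j ++ dig n.+1 r (j.+1 %/ n.+1 ^ (k - r)).
Proof.
move=> rk.
have ke : k = r + (k - r) by rewrite subnKC // ltnW.
have sp x : dig n.+1 k x = dig n.+1 r (x %/ n.+1 ^ (k - r)) ++ dig n.+1 (k - r) x.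
  by rewrite {1}ke dig_split.
apply: (@eq_from_nth _ 0).
  by rewrite size_map size_iota size_cat !size_dig addnC -ke.
rewrite size_map size_iota => t tk.
rewrite (nth_map 0) ?size_iota // nth_iota // add0n nth_cat size_dig.
case: ltnP => h.
  rewrite -addnA G_at; last by rewrite -ltn_subRL.
  rewrite sp nth_cat size_dig ltnNge leq_addr /= addKn //.
rewrite (_ : j * k + r + t = j.+1 * k + (t - (k - r))); last first.
  rewrite mulSn; lia.
rewrite G_at; last by lia.
by rewrite sp nth_cat size_dig (_ : t - (k - r) < r) //; lia.
Qed.

Lemma dig_eq B m x y : 0 < B -> y < B ^ m -> (dig B m x == dig B m y) = (x %% B ^ m == y).
Proof.
move=> B0 yB; apply/eqP/eqP => [/dig_inj -> //|]; first by rewrite modn_small.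
by move=> <-; rewrite -dig_mod.
Qed.

Lemma count_r n k r b : r < k -> size b = k -> all (fun x => x <= n) b ->
  count (fun j => win (G n k) k (j * k + r) == b) (iota 0 (n.+1 ^ k)) = 1.
Proof.
move=> rk sb ab.
rewrite (eq_count (a2 := fun j => dig n.+1 (k - r) j ++ dig n.+1 r (j.+1 %/ n.+1 ^ (k - r)) == b)); last first.
  by move=> j; rewrite /= win_block.
have ab' : all (fun x => x < n.+1) b by [].
have /andP [a1 a2] : all (fun x => x < n.+1) (take (k - r) b) && all (fun x => x < n.+1) (drop (k - r) b).
  by rewrite -all_cat cat_take_drop.
have krk : k - r <= size b by rewrite sb leq_subr.
have [y1 y1l e1] := @dig_surj n.+1 (k - r) (take (k - r) b) (size_takel krk) a1.
have sd : size (drop (k - r) b) = r by rewrite size_drop sb subKn // ltnW.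
have [y2 y2l e2] := @dig_surj n.+1 r (drop (k - r) b) sd a2.
rewrite -(cat_take_drop (k - r) b) -e1 -e2.
rewrite (eq_count (a2 := fun j => (j %% n.+1 ^ (k - r) == y1) && ((j.+1 %/ n.+1 ^ (k - r)) %% n.+1 ^ r == y2))); last first.
  by move=> j /=; rewrite eqseq_cat ?size_dig // !dig_eq.
have -> : n.+1 ^ k = n.+1 ^ r * n.+1 ^ (k - r) by rewrite -expnD subnKC // ltnW.
by apply: arith_count; rewrite ?expn_gt0.
Qed.

Lemma count_sum (T : Type) (P : pred T) s : count P s = \sum_(x <- s) (P x : nat).
Proof. by elim: s => [|x s IH] /=; rewrite ?big_nil ?big_cons ?IH. Qed.

Lemma count_blocks (P : pred nat) N k :
  count P (iota 0 (N * k)) = \sum_(j <- iota 0 N) count (fun r => P (j * k + r)) (iota 0 k).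
Proof.
elim: N => [|N IH]; first by rewrite big_nil.
rewrite mulSn addnC iotaD count_cat IH -addn1 iotaD big_cat big_seq1 /=.
congr (_ + _).
rewrite (_ : iota (N * k) k = map (addn (N * k)) (iota 0 k)) ?count_map //.
by rewrite -iotaDl addn0.
Qed.

Lemma count_period n k b : 0 < k -> size b = k -> all (fun x => x <= n) b ->
  count (fun p => win (G n k) k p == b) (iota 0 (k * n.+1 ^ k)) = k.
Proof.
move=> k0 sb ab.
rewrite mulnC count_blocks.
under eq_bigr => j _ do rewrite count_sum.
rewrite exchange_big /=.
rewrite (eq_big_seq (fun _ => 1)).
  by rewrite sum1_size size_iota.
move=> r; rewrite mem_iota /= => rk.
by rewrite -count_sum count_r.
Qed.

Lemma count_shift (f : pred nat) L c : (forall p, f (p + L) = f p) ->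
  count (fun s => f (s + c)) (iota 0 L) = count f (iota 0 L).
Proof.
move=> per; elim: c => [|c IH].
  by apply: eq_count => s; rewrite addn0.
have e1 : iota 0 L.+1 = 0 :: iota 1 L by [].
have e2 : iota 1 L = map succn (iota 0 L) by rewrite -[1]/(1 + 0) iotaDl.
have : count (fun s => f (s + c)) (iota 0 L.+1) = count (fun s => f (s + c)) (iota 0 L) + f (L + c).
  by rewrite -addn1 iotaD count_cat /= addn0.
rewrite e1 /= add0n e2 count_map -IH (addnC L) per addnC => /eqP; rewrite eqn_add2r => /eqP <-.
by apply: eq_count => s /=; rewrite addSnnS.
Qed.

Lemma nth_flatten_k (k : nat) (f : nat -> seq nat) s j r :
  (forall x, size (f x) = k) -> r < k -> j < size s ->
  nth 0 (flatten (map f s)) (j * k + r) = nth 0 (f (nth 0 s j)) r.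
Proof.
move=> sf rk; elim: s j => [|x s IH] [|j] //=.
  by rewrite nth_cat sf rk.
rewrite ltnS => js; rewrite nth_cat sf mulSn -addnA ltnNge leq_addr /= addKn.
exact: IH.
Qed.

Lemma rot_iota_dig n k i j : i <= n.+1 ^ k -> j < n.+1 ^ k ->
  dig n.+1 k (nth 0 (rot i (iota 0 (n.+1 ^ k))) j) = dig n.+1 k (i + j).
Proof.
move=> iN jN; rewrite /rot nth_cat size_drop size_iota.
case: ltnP => h.
  by rewrite nth_drop nth_iota ?add0n //; lia.
rewrite nth_take; last by lia.
rewrite nth_iota; last by lia.
rewrite add0n -dig_periodic; congr dig; lia.
Qed.

Lemma concatW_G n k idx m : 0 < k -> (forall j, idx j <= n) ->
  concatW n k idx m = G n k (m %% (k * n.+1 ^ k) + idx (m %/ (k * n.+1 ^ k)) * k).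
Proof.
move=> k0 hidx; rewrite /concatW /bigW lex_words_dig -map_rot.
set L := k * n.+1 ^ k; set i := idx _; set q := m %% L.
have N0 : 0 < n.+1 ^ k by rewrite expn_gt0.
have qL : q < L by rewrite ltn_mod muln_gt0 k0.
have iN : i <= n.+1 ^ k.
  apply: leq_trans (hidx _) _; apply: ltnW.
  by have := @leq_pexp2l n.+1 1 k (ltn0Sn n) k0; rewrite expn1.
have jN : q %/ k < n.+1 ^ k by rewrite ltn_divLR // mulnC.
rewrite {1}(divn_eq q k) (nth_flatten_k (fun x => size_dig _ _ _)) ?ltn_mod ?size_rot ?size_iota //.
rewrite rot_iota_dig // -G_at ?ltn_mod //; congr G.
rewrite [in RHS](divn_eq q k) mulnDl; lia.
Qed.

Lemma G_zero n k i e : i <= n -> e.+1 < k -> G n k (i * k + e) = 0.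
Proof.
move=> iN ek; rewrite G_at; last by lia.
have -> : k = (k - 1) + 1 by lia.
rewrite dig_split expn1 divn_small // dig0 nth_cat size_nseq.
by rewrite (_ : e < k - 1) ?nth_nseq ?if_same //; lia.
Qed.

Lemma win_concat n k idx q s : 0 < k -> (forall j, idx j <= n) -> s < k * n.+1 ^ k ->
  win (concatW n k idx) k (q * (k * n.+1 ^ k) + s) = win (G n k) k (s + idx q * k).
Proof.
move=> k0 hidx sL; set L := k * n.+1 ^ k in sL *.
have N0 : 0 < n.+1 ^ k by rewrite expn_gt0.
have L0 : 0 < L by rewrite muln_gt0 k0.
have kL : k <= L by rewrite /L leq_pmulr.
apply/eq_in_map => t; rewrite mem_iota add0n => tk.
rewrite concatW_G // -/L.
case: (ltnP (s + t) L) => h.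
  rewrite -addnA modnMDl modn_small // divnMDl // divn_small // addn0.
  by rewrite addnAC.
have -> : q * L + s + t = q.+1 * L + (s + t - L) by rewrite mulSn; lia.
rewrite modnMDl modn_small; last by lia.
rewrite divnMDl // divn_small ?addn0; last by lia.
rewrite addnC G_zero //; last by lia.
have -> : s + idx q * k + t = (idx q * k + (s + t - L)) + k * n.+1 ^ k by rewrite -/L; lia.
rewrite G_periodic // G_zero //; lia.
Qed.

Lemma occ_win a b : occ a b =1 (fun m => count (fun j => win a (size b) j == b) (iota 0 m)).
Proof. by []. Qed.

Lemma occ_block n k idx b q : 0 < k -> (forall j, idx j <= n) ->
  size b = k -> all (fun x => x <= n) b ->
  occ (concatW n k idx) b (q * (k * n.+1 ^ k)) = q * k.
Proof.
move=> k0 hidx sb ab; rewrite occ_win sb.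
set L := k * n.+1 ^ k.
elim: q => [|q IH]; first by rewrite mul0n.
rewrite mulSnr iotaD count_cat IH mulSnr; congr (_ + _).
rewrite (_ : iota (q * L) L = map (addn (q * L)) (iota 0 L)); last by rewrite -iotaDl addn0.
rewrite count_map.
rewrite (@eq_in_count _ _ (fun s => win (G n k) k (s + idx q * k) == b)); last first.
  by move=> s; rewrite mem_iota add0n /= => sL; rewrite win_concat.
rewrite (count_shift (f := fun p => win (G n k) k p == b)); last first.
  by move=> p /=; rewrite win_periodic.
exact: count_period.
Qed.

Lemma occ_bounds n k idx b m : 0 < k -> (forall j, idx j <= n) ->
  size b = k -> all (fun x => x <= n) b ->
  m %/ (k * n.+1 ^ k) * k <= occ (concatW n k idx) b m <=
  m %/ (k * n.+1 ^ k) * k + m %% (k * n.+1 ^ k).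
Proof.
move=> k0 hidx sb ab.
rewrite -(occ_block (m %/ (k * n.+1 ^ k)) k0 hidx sb ab) !occ_win.
rewrite {2 3}(divn_eq m (k * n.+1 ^ k)) iotaD count_cat leq_addr /= leq_add2l.
apply: leq_trans (count_size _ _) _; by rewrite size_iota.
Qed.

Open Scope R_scope.

Lemma INR_add a b : INR (a + b)%N = INR a + INR b.
Proof. by rewrite -plus_INR. Qed.
Lemma INR_mul a b : INR (a * b)%N = INR a * INR b.
Proof. by rewrite -mult_INR. Qed.

Lemma prop_aux (n k : nat) (idx : nat -> nat) :
  (1 <= n)%N -> (1 <= k)%N -> (forall j, (idx j <= n)%N) ->
  simply_normal n k (concatW n k idx).
Proof.
move=> n1 k0 hidx b sb ab eps heps.
set N := (n.+1 ^ k)%N; set L := (k * N)%N.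
have N0 : (0 < N)%N by rewrite expn_gt0.
have L0 : (0 < L)%N by rewrite muln_gt0 k0.
have [M HM] := INR_archimed eps (INR L) heps.
exists M.+1 => m hm.
have hm' : (M.+1 <= m)%N by apply/leP.
have := occ_bounds m k0 hidx sb ab; rewrite -/N -/L => /andP [lo hi].
set o := occ _ b m in lo hi *.
set q := (m %/ L)%N in lo hi; set s := (m %% L)%N in hi.
have em : m = (q * L + s)%N by rewrite /q /s -divn_eq.
have sL : (s < L)%N by rewrite /s ltn_mod.
have Rem : INR m = INR q * (INR k * INR N) + INR s.
  by rewrite em INR_add !INR_mul.
have Rlo : INR q * INR k <= INR o by rewrite -INR_mul; apply/le_INR/leP.
have Rhi : INR o <= INR q * INR k + INR s.
  by rewrite -INR_mul -INR_add; apply/le_INR/leP.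
have RsL : INR s < INR k * INR N by rewrite -INR_mul; apply/lt_INR/ltP.
have RN : 1 <= INR N by change 1 with (INR 1); apply/le_INR/leP.
have Rm : INR M + 1 <= INR m by rewrite -S_INR; apply/le_INR/leP.
have RL : INR L = INR k * INR N by rewrite -INR_mul.
have RM0 : 0 <= INR M by apply: pos_INR.
have Rs0 : 0 <= INR s by apply: pos_INR.
have Rq0 : 0 <= INR q by apply: pos_INR.
have Rk0 : 0 <= INR k by apply: pos_INR.
have Rm0 : 0 < INR m by lra.
have RN0 : 0 < INR N by lra.
have Rme : INR M * eps < INR m * eps by apply: Rmult_lt_compat_r; lra.
have h1 : INR o * INR N <= (INR q * INR k + INR s) * INR N by apply: Rmult_le_compat_r; lra.
have h2 : INR s * INR N < (INR m * eps) * INR N by apply: Rmult_lt_compat_r; lra.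
have h3 : (INR q * INR k) * INR N <= INR o * INR N by apply: Rmult_le_compat_r; lra.
have h4 : (INR m * eps) * 1 <= (INR m * eps) * INR N.
  by apply: Rmult_le_compat_l; [apply: Rlt_le; apply: Rmult_lt_0_compat|].
set D := INR m * INR N.
have D0 : 0 < D by apply: Rmult_lt_0_compat.
have k1 : INR o * INR N - INR m < eps * D by rewrite /D; nra.
have k2 : - (eps * D) < INR o * INR N - INR m by rewrite /D; nra.
rewrite /R_dist -/o.
rewrite (_ : INR o / INR m - / INR N = (INR o * INR N - INR m) / D); last first.
  by rewrite /D; field; lra.
apply: Rabs_def1.
  apply: (Rmult_lt_reg_r D) => //; rewrite /Rdiv Rmult_assoc Rinv_l; lra.
apply: (Rmult_lt_reg_r D) => //; rewrite /Rdiv Rmult_assoc Rinv_l; lra.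
Qed.

Close Scope R_scope.

Theorem proposition2p2 (n k : nat) (idx : nat -> nat) :
  1 <= n -> 1 <= k -> (forall j, idx j <= n) ->
  simply_normal n k (concatW n k idx).
Proof. exact: prop_aux. Qed.
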